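(* For $k\ge0$ let $\bar H_k\in\mathbb{R}^{p\times p}$ be (random) symmetric matrices with symmetric indefinite factorizations $\bar H_k=P_k^TL_kB_kL_k^TP_k$. Let $\tau_k>0$ be thresholds and let $\underline{\tau}$ be a constant with $0<\underline{\tau}\le\tau_k$ for all $k$. Let $B_k=Q_k\Lambda_kQ_k^T$ be an eigendecomposition with $\Lambda_k=\mathrm{diag}(\lambda_{k1},\dots,\lambda_{kp})$, set $\bar\Lambda_k=\mathrm{diag}(\bar\lambda_{k1},\dots,\bar\lambda_{kp})$ with $\bar\lambda_{kj}=\max\{\tau_k,|\lambda_{kj}|\}$, and $\bar{\bar H}_k=P_k^TL_kQ_k\bar\Lambda_kQ_k^TL_k^TP_k$. Then: (a) $\lambda_{\min}(\bar{\bar H}_k)\ge\underline{\sigma}^2\underline{\tau}>0$; (b) $\bar{\bar H}_k^{-1}$ exists a.s., $c_k^2\bar{\bar H}_k^{-1}\to0$ a.s., and for some constants $\delta,\rho>0$, $\mathbb{E}\big[\|\bar{\bar H}_k^{-1}\|^{2+\delta}\big]\le\rho$.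
   Context: In the factorization $P_k\bar H_kP_k^T=L_kB_kL_k^T$: $P_k$ is a permutation matrix, $B_k$ is block diagonal with symmetric $1\times1$ or $2\times2$ blocks, and $L_k$ is unit lower triangular with entries bounded in magnitude by a fixed constant independent of $k$. $\underline{\sigma}>0$ is a constant, independent of $k$ and of the sample path, with $\sigma_{\min}(L_k)\ge\underline{\sigma}$ for all $k$ (smallest singular value). $\{c_k\}$ is a positive scalar sequence decreasing to $0$ (the perturbation-size gain of the second-order simultaneous-perturbation algorithm). *)

(* Defs.v *)
From HB Require Import structures.
From mathcomp Require Import all_boot all_order all_algebra.
From mathcomp Require Import all_classical all_reals all_analysis.
Set Implicit Arguments. Unset Strict Implicit. Unset Printing Implicit Defensive.
Import Order.TTheory GRing.Theory Num.Theory.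
Import numFieldNormedType.Exports.
Local Open Scope ring_scope.

Definition vnorm {R : realType} {p : nat} (x : 'cV[R]_p) : R :=
  Num.sqrt (\sum_i (x i 0) ^+ 2).

Definition opnorm {R : realType} {p : nat} (A : 'M[R]_p) : R :=
  sup [set vnorm (A *m x) | x in [set x : 'cV[R]_p | vnorm x = 1]].

Definition singular_value {R : realType} {p : nat} (L : 'M[R]_p) (s : R) : Prop :=
  0 <= s /\ eigenvalue (L^T *m L) (s ^+ 2).

Definition unit_lower_triangular {R : realType} {p : nat} (L : 'M[R]_p) : Prop :=
  (forall i, L i i = 1) /\ (forall i j : 'I_p, (i < j)%N -> L i j = 0).

Definition block_diag_1x1_2x2 {R : realType} {p : nat} (B : 'M[R]_p) : Prop :=
  B^T = B /\
  (forall i j : 'I_p, (j.+1 < i)%N -> B i j = 0) /\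
  (forall i j k : 'I_p, i = j.+1 :> nat -> k = i.+1 :> nat ->
       B i j != 0 -> B k i = 0).

(* Main.v *)
Require Import Defs.
From HB Require Import structures.
From mathcomp Require Import all_boot all_order all_algebra all_fingroup.
From mathcomp Require Import all_classical all_reals all_analysis.
From mathcomp Require Import complex ring lra measurable_realfun.
Import Order.TTheory GRing.Theory Num.Theory.
Import numFieldNormedType.Exports.
Set Implicit Arguments. Unset Strict Implicit.
Local Open Scope ring_scope.
Local Open Scope classical_set_scope.
Section SL.
Variable R : rcfType.
Local Notation toC := (real_complex R).
Lemma sqsum_ge0 n (w : 'rV[R]_n) : 0 <= (w *m w^T) 0 0.
Proof.
rewrite mxE; apply: sumr_ge0 => i _; rewrite mxE -expr2; exact: sqr_ge0.
Qed.

Lemma sqsum_gt0 n (w : 'rV[R]_n) : w != 0 -> 0 < (w *m w^T) 0 0.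
Proof.
move=> wn0; rewrite lt_neqAle sqsum_ge0 andbT.
apply: contra wn0; rewrite mxE => /eqP/esym/eqP.
rewrite psumr_eq0 => [/allP H|i _]; last by rewrite mxE -expr2 sqr_ge0.
apply/eqP/rowP => j; rewrite !mxE.
have := H j; rewrite mem_index_enum => /(_ isT) /=; rewrite mxE -expr2.
by rewrite sqrf_eq0 => /eqP.
Qed.

Lemma eig_LLt_ge p (L : 'M[R]_p) (s0 : R) :
  L \in unitmx ->
  (forall s, 0 <= s -> eigenvalue (L^T *m L) (s^+2) -> s0 <= s) -> 0 <= s0 ->
  forall r, eigenvalue (L *m L^T) r -> s0 ^+ 2 <= r.
Proof.
move=> Lu Hs s0ge r /eigenvalueP [v Hv vn0].
set w := v *m L.
have wn0 : w != 0.
  apply: contra vn0 => /eqP w0.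
  by rewrite -(mulmxK Lu v) -/w w0 mul0mx.
have Hw : w *m (L^T *m L) = r *: w.
  by rewrite /w mulmxA -(mulmxA v) Hv -scalemxAl.
have rge : 0 <= r.
  have E : (w *m w^T) 0 0 = r * (v *m v^T) 0 0.
    rewrite /w trmx_mul mulmxA -(mulmxA v) Hv -scalemxAl mxE.
    by rewrite mxE mulr_sumr.
  have := sqsum_ge0 w; rewrite E pmulr_lge0 //; exact: sqsum_gt0.
have H := Hs (Num.sqrt r) (sqrtr_ge0 r).
rewrite sqr_sqrtr // in H; have {}H := H (introT eigenvalueP (ex_intro2 _ _ w Hw wn0)).
 rewrite -(sqr_sqrtr rge); apply: lerXn2r => //; rewrite ?nnegrE ?sqrtr_ge0 //.
Qed.

Lemma quad_sym n (N : 'M[R]_n) (m : R) : N^T = N ->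
  (forall r, eigenvalue N r -> m <= r) ->
  forall z : 'rV_n, m * (z *m z^T) 0 0 <= (z *m N *m z^T) 0 0.
Proof.
move=> Nsym Hm z.
pose Nc := map_mx toC N.
have NcH : Nc \is hermsymmx.
  apply: realsym_hermsym.
    apply/is_hermitianmxP; rewrite expr0 scale1r map_mx_id //.
    by rewrite /Nc map_trmx Nsym.
  by apply: (introT mxOverP) => i j; rewrite mxE; apply/complex_realP; exists (N i j).
have /orthomx_spectralP NE := hermitian_normalmx NcH.
have Uu : spectralmx Nc \is unitarymx := spectral_unitarymx Nc.
have Dr := hermitian_spectral_diag_real NcH.
move: NE Uu Dr; set U := spectralmx Nc; set D := spectral_diag Nc => NE Uu Dr.
have UUt : U *m (U^t*)%sesqui = 1%:M by apply/unitarymxP.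
have UtU : (U^t*)%sesqui *m U = 1%:M by apply: mulmx1C.
rewrite invmx_unitary // in NE.
have Dge : forall j, m%:C%C <= D 0 j.
  move=> j; have /complex_realP [d Dd] : D 0 j \is Num.real by apply: (mxOverP Dr).
  rewrite Dd lecR; apply: Hm.
  rewrite eigenvalue_root_char -(fmorph_root toC) map_char_poly.
  set t := (X in root _ X); have -> : t = D 0 j by rewrite Dd.
  rewrite -/Nc -eigenvalue_root_char.
  apply/eigenvalueP; exists (row j U).
    by rewrite NE !mulmxA -row_mul UUt row1 -rowE row_diag_mx -scalemxAl -rowE.
  apply/eqP => H0; have := congr1 (mulmx^~ (U^t*)%sesqui) H0.
  rewrite mul0mx -row_mul UUt row1 => /rowP/(_ j); rewrite !mxE !eqxx /= => /eqP.
  by rewrite oner_eq0.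
pose zc := map_mx toC z.
have zT : (zc^t*)%sesqui = map_mx toC z^T.
  apply/matrixP => i j; rewrite !mxE /=; apply/CrealP/complex_realP; by exists (z j i).
have E1 : toC ((z *m N *m z^T) 0 0) = (zc *m Nc *m (zc^t*)%sesqui) 0 0.
  by rewrite zT /Nc /zc -(map_mxM toC) -(map_mxM toC) [RHS]mxE.
have E2 : toC ((z *m z^T) 0 0) = (zc *m (zc^t*)%sesqui) 0 0.
  by rewrite zT /zc -(map_mxM toC) [RHS]mxE.
pose y := zc *m (U^t*)%sesqui.
have yT : (y^t*)%sesqui = U *m (zc^t*)%sesqui.
  by rewrite /y trmx_mul map_mxM trmxCK.
have E3 : zc *m Nc *m (zc^t*)%sesqui = y *m diag_mx D *m (y^t*)%sesqui.
  by rewrite yT NE /y !mulmxA.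
have E4 : zc *m (zc^t*)%sesqui = y *m (y^t*)%sesqui.
  by rewrite yT /y !mulmxA -(mulmxA zc) UtU mulmx1.
rewrite -lecR rmorphM /= E1 E2 E3 E4.
rewrite !mxE mulr_sumr; apply: ler_sum => j _.
rewrite mul_mx_diag !mxE [X in _ <= X]mulrAC [X in _ <= X]mulrC.
by apply: ler_wpM2r; [exact: mul_conjC_ge0 | exact: Dge].
Qed.

Lemma quad_LLt p (L : 'M[R]_p) (s0 : R) :
  L \in unitmx ->
  (forall s, 0 <= s -> eigenvalue (L^T *m L) (s^+2) -> s0 <= s) -> 0 <= s0 ->
  forall z : 'rV_p, s0 ^+ 2 * (z *m z^T) 0 0 <= (z *m (L *m L^T) *m z^T) 0 0.
Proof.
move=> Lu Hs s0ge; apply: quad_sym; first by rewrite trmx_mul trmxK.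
exact: eig_LLt_ge.
Qed.

Lemma perm_tr_mul p (P : 'M[R]_p) : is_perm_mx P -> P^T *m P = 1%:M.
Proof.
by move=> /is_perm_mxP [s ->]; rewrite tr_perm_mx -perm_mxM mulVg perm_mx1.
Qed.

Lemma quad_Hbb p (P L Q : 'M[R]_p) (lb : 'rV[R]_p) (s0 t0 : R) :
  is_perm_mx P -> L \in unitmx ->
  (forall s, 0 <= s -> eigenvalue (L^T *m L) (s^+2) -> s0 <= s) -> 0 <= s0 ->
  0 <= t0 -> Q *m Q^T = 1%:M -> (forall j, t0 <= lb 0 j) ->
  forall u : 'rV_p, s0 ^+ 2 * t0 * (u *m u^T) 0 0 <=
    (u *m (P^T *m L *m Q *m diag_mx lb *m Q^T *m L^T *m P) *m u^T) 0 0.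
Proof.
move=> Pp Lu Hs s0ge t0ge QQ lbge u.
pose z := u *m P^T; pose w := z *m L *m Q.
have wT : Q^T *m L^T *m P *m u^T = w^T by rewrite /w /z !trmx_mul trmxK !mulmxA.
have E : u *m (P^T *m L *m Q *m diag_mx lb *m Q^T *m L^T *m P) *m u^T
    = w *m diag_mx lb *m w^T by rewrite -wT /w /z !mulmxA.
have zz : z *m z^T = u *m u^T.
  by rewrite /z trmx_mul trmxK mulmxA -(mulmxA u) perm_tr_mul // mulmx1.
have ww : w *m w^T = z *m (L *m L^T) *m z^T.
  by rewrite /w !trmx_mul !mulmxA -(mulmxA _ Q) QQ mulmx1.
rewrite E -zz.
apply: (@le_trans _ _ (t0 * (w *m w^T) 0 0)).
  rewrite ww [s0 ^+ 2 * t0]mulrC -mulrA; apply: ler_wpM2l => //.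
  exact: quad_LLt.
rewrite !mxE mulr_sumr; apply: ler_sum => j _.
rewrite mul_mx_diag !mxE [X in _ <= X]mulrAC [X in _ <= X]mulrC.
apply: ler_wpM2r; last exact: lbge.
rewrite -expr2; exact: sqr_ge0.
Qed.
End SL.

Section AN.
Variable R : realType.

Lemma vnormE p (x : 'cV[R]_p) : vnorm x = Num.sqrt ((x^T *m x) 0 0).
Proof. by rewrite /vnorm mxE; congr Num.sqrt; apply: eq_bigr => i _; rewrite mxE expr2. Qed.

Lemma vnorm_ge0 p (x : 'cV[R]_p) : 0 <= vnorm x.
Proof. exact: sqrtr_ge0. Qed.

Lemma cv_bound p (H : 'M[R]_p) (m : R) : 0 < m ->
  (forall u : 'rV_p, m * (u *m u^T) 0 0 <= (u *m H *m u^T) 0 0) ->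
  forall x : 'cV_p, m * vnorm x <= vnorm (H *m x).
Proof.
move=> m0 Hq x; pose y := H *m x.
pose a := \sum_i x i 0 ^+ 2; pose b := \sum_i y i 0 ^+ 2;
pose c := \sum_i x i 0 * y i 0.
have Ha : m * a <= c.
  have := Hq x^T; rewrite trmxK -mulmxA -/y !mxE.
  have -> : \sum_j x^T 0 j * x j 0 = a by apply: eq_bigr => j _; rewrite mxE expr2.
  by have -> : \sum_j x^T 0 j * (y j 0) = c by apply: eq_bigr => j _; rewrite mxE.
have H0 : 0 <= b - 2 * m * c + m ^+ 2 * a.
  have -> : b - 2 * m * c + m ^+ 2 * a = \sum_i (y i 0 - m * x i 0) ^+ 2.
    rewrite /a /b /c !mulr_sumr -sumrB -big_split /=; apply: eq_bigr => i _; ring.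
  by apply: sumr_ge0 => i _; exact: sqr_ge0.
have a0 : 0 <= a by apply: sumr_ge0 => i _; exact: sqr_ge0.
have Hb : m ^+ 2 * a <= b by nra.
rewrite /vnorm -/a -/b -(ger0_norm (ltW m0)) -sqrtr_sqr -sqrtrM ?sqr_ge0 //.
rewrite ler_sqrt; first exact: Hb.
by apply: sumr_ge0 => i _; exact: sqr_ge0.
Qed.

Lemma inv_bound p (H : 'M[R]_p) (m : R) : 0 < m ->
  (forall u : 'rV_p, m * (u *m u^T) 0 0 <= (u *m H *m u^T) 0 0) ->
  H \in unitmx -> forall y : 'cV_p, vnorm (invmx H *m y) <= vnorm y / m.
Proof.
move=> m0 Hq Hu y; have := cv_bound m0 Hq (invmx H *m y).
by rewrite mulmxA mulmxV // mul1mx => h; rewrite ler_pdivlMr // mulrC.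
Qed.

Lemma opnorm_bound p (H : 'M[R]_p) (m : R) : 0 < m ->
  (forall u : 'rV_p, m * (u *m u^T) 0 0 <= (u *m H *m u^T) 0 0) ->
  H \in unitmx -> 0 <= opnorm (invmx H) <= m^-1.
Proof.
move=> m0 Hq Hu; rewrite /opnorm.
set S := [set _ | _ in _].
have ub : ubound S m^-1.
  move=> _ [x /= x1 <-]; apply: le_trans (inv_bound m0 Hq Hu x) _.
  by rewrite x1 mul1r.
have [->|/set0P ne] := eqVneq S set0.
  by rewrite sup0 lexx /= invr_ge0 ltW.
rewrite ge_sup // andbT; case: ne => e Se.
apply: (le_trans _ (ub_le_sup (ex_intro _ _ ub) Se)).
by case: Se => x _ <-; exact: vnorm_ge0.
Qed.

Lemma entry_bound p (H : 'M[R]_p) (m : R) : 0 < m ->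
  (forall u : 'rV_p, m * (u *m u^T) 0 0 <= (u *m H *m u^T) 0 0) ->
  H \in unitmx -> forall i j, `|invmx H i j| <= m^-1.
Proof.
move=> m0 Hq Hu i j.
have := inv_bound m0 Hq Hu (delta_mx j 0).
have -> : vnorm (delta_mx j 0 : 'cV[R]_p) = 1.
  rewrite /vnorm (bigD1 j) //= big1 => [|k kj]; last by rewrite mxE (negbTE kj) expr0n.
  by rewrite mxE !eqxx expr1n addr0 sqrtr1.
rewrite mul1r; apply: le_trans.
rewrite -colE /vnorm.
have -> : invmx H i j = col j (invmx H) i 0 by rewrite mxE.
rewrite -sqrtr_sqr ler_sqrt; last first.
  by apply: sumr_ge0 => k _; exact: sqr_ge0.
rewrite (bigD1 i) //= lerDl; apply: sumr_ge0 => k _; exact: sqr_ge0.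
Qed.

Import HBNNSimple.
Lemma int_bound d (T : measurableType d) (Pr : probability T R) (f : T -> R) (M : R) :
  (forall x, 0 <= f x) -> (forall x, f x <= M) -> (\int[Pr]_x (f x)%:E <= M%:E)%E.
Proof.
move=> f0 fM.
rewrite ge0_integralTE => [|x]; last by rewrite lee_fin.
apply: ge_ereal_sup => _ [h /= hle <-].
rewrite -integralT_nnsfun.
apply: (@le_trans _ _ (\int[Pr]_x (cst M%:E) x)%E).
  apply: ge0_le_integral => //.
  - by move=> x _; rewrite lee_fin; exact: fun_ge0.
  - by apply/measurable_EFinP.
  - by move=> x _; apply: le_trans (hle x) _; rewrite lee_fin.
have P1 : (M%:E * Pr [set: T] = M%:E)%E.
  by rewrite [X in (_ * X)%E](_ : _ = 1%E) ?mule1 //; exact: probability_setT.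
have H := lexx (M%:E * Pr [set: T])%E; rewrite [X in (_ <= X)%E]P1 in H.
rewrite integral_cst //; exact: H.
Qed.

Lemma mx_norm_le p (A : 'M[R]_p) (K : R) : 0 <= K -> (forall i j, `|A i j| <= K) -> `|A| <= K.
Proof.
move=> K0 HA; change (mx_norm A <= K).
by have [->|/mx_norm_neq0 [i ->]] := eqVneq (mx_norm A) 0.
Qed.

Lemma cvg_bounded p (A : nat -> 'M[R]_p) (c : nat -> R) (K : R) : c @ \oo --> 0 ->
  0 <= K -> (forall k i j, `|A k i j| <= K) -> (fun k => c k ^+ 2 *: A k) @ \oo --> (0 : 'M[R]_p).
Proof.
move=> hc K0 HA; apply: norm_cvg0.
have Hb : forall k, 0 <= `|c k ^+ 2 *: A k| <= c k * c k * K.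
  move=> k; rewrite normr_ge0 /= mx_normZ normrX real_normK ?num_real // -expr2.
  by apply: ler_wpM2l; [exact: sqr_ge0 | exact: mx_norm_le].
apply: (@squeeze_cvgr _ _ _ _ (fun=> 0) (fun k => c k * c k * K) _ _ 0).
- exact: nearW.
- exact: cvg_cst.
- have := cvgM (cvgM hc hc) (cvg_cst K); rewrite !mul0r; exact.
Qed.
End AN.

Theorem theoremA2 (R : realType) (d : measure_display) (T : measurableType d)
  (Pr : probability T R) (p : nat)
  (Hb : nat -> T -> 'M[R]_p)          (* \bar H_k *)
  (P L B Q : nat -> T -> 'M[R]_p)     (* P_k, L_k, B_k, Q_k *)
  (lam : nat -> T -> 'rV[R]_p)        (* diagonal of Lambda_k *)
  (tau : nat -> T -> R) (tau_lo : R)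
  (sigma_lo : R) (Lbnd : R) (c : nat -> R) :
  (forall k w, (Hb k w)^T = Hb k w) ->
  (forall k w, is_perm_mx (P k w)) ->
  (forall k w, unit_lower_triangular (L k w)) ->
  (forall k w (i j : 'I_p), `|L k w i j| <= Lbnd) ->
  (forall k w, block_diag_1x1_2x2 (B k w)) ->
  (forall k w, Hb k w = (P k w)^T *m L k w *m B k w *m (L k w)^T *m P k w) ->
  0 < sigma_lo ->
  (forall k w s, singular_value (L k w) s -> sigma_lo <= s) ->
  (forall n, 0 < c n) -> (forall n, c n.+1 <= c n) -> c @ \oo --> 0 ->
  0 < tau_lo -> (forall k w, tau_lo <= tau k w) ->
  (forall k w, Q k w *m (Q k w)^T = 1%:M) ->
  (forall k w, B k w = Q k w *m diag_mx (lam k w) *m (Q k w)^T) ->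
  let Hbb := fun k w =>
    (P k w)^T *m L k w *m Q k w
      *m diag_mx (\row_j Num.max (tau k w) `|lam k w 0 j|)
      *m (Q k w)^T *m (L k w)^T *m P k w in
  (* (a) *)
  ((forall k w a, eigenvalue (Hbb k w) a -> sigma_lo ^+ 2 * tau_lo <= a)
   /\ 0 < sigma_lo ^+ 2 * tau_lo)
  /\
  (* (b) *)
  ({ae Pr, forall w, forall k, Hbb k w \in unitmx}
   /\ {ae Pr, forall w, (fun k => c k ^+ 2 *: invmx (Hbb k w)) @ \oo --> (0 : 'M[R]_p)}
   /\ exists delta rho : R, 0 < delta /\ 0 < rho /\
        forall k, (\int[Pr]_w ((opnorm (invmx (Hbb k w))) `^ (2 + delta))%:E
                   <= rho%:E)%E).
Proof.
move=> Hsym Pp Ltri Lb Bd HbE s0 Hsing c0 cdec hc t0 tle QQ BE Hbb.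
set m := sigma_lo ^+ 2 * tau_lo.
have m0 : 0 < m by rewrite /m mulr_gt0 // exprn_gt0.
have Lu : forall k w, L k w \in unitmx.
  move=> k w; case: (Ltri k w) => Ld Lt.
  rewrite unitmxE det_trig; last by apply/is_trig_mxP => i j /Lt.
  by rewrite big1 ?unitr1 // => i _; rewrite Ld.
have Hs : forall k w s, 0 <= s -> eigenvalue ((L k w)^T *m L k w) (s ^+ 2) -> sigma_lo <= s.
  by move=> k w s sge ev; apply: (Hsing k w); split.
have lbge : forall k w j, tau_lo <= (\row_j Num.max (tau k w) `|lam k w 0 j|) 0 j.
  by move=> k w j; rewrite mxE le_max tle.
have quad : forall k w (u : 'rV_p), m * (u *m u^T) 0 0 <= (u *m Hbb k w *m u^T) 0 0.
  move=> k w u; rewrite /Hbb /m.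
  apply: quad_Hbb; [exact: Pp | exact: Lu | exact: Hs | exact: ltW | exact: ltW | exact: QQ | exact: lbge].
have Hu : forall k w, Hbb k w \in unitmx.
  move=> k w; rewrite /Hbb !unitmx_mul !unitmx_tr Lu andbT.
  have [Pu _] := mulmx1_unit (perm_tr_mul (Pp k w)).
  rewrite unitmx_tr in Pu; rewrite Pu /=.
  have [Qu _] := mulmx1_unit (QQ k w); rewrite Qu /=.
  rewrite unitmxE det_diag unitfE !andbT; apply/prodf_neq0 => j _.
  by apply: lt0r_neq0; apply: lt_le_trans (lbge k w j); exact: lt_le_trans t0 (lexx _).
split.
  split=> //.
  move=> k w a /eigenvalueP [v Hv vn0].
  have := quad k w v; rewrite Hv -scalemxAl [X in _ <= X]mxE.
  by rewrite ler_pM2r // sqsum_gt0.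
split; first by apply: aeW => w k; exact: Hu.
split.
  apply: aeW => w; apply: (@cvg_bounded _ _ (fun k => invmx (Hbb k w)) c m^-1) => //.
    by rewrite invr_ge0 ltW.
  by move=> k i j; exact: (entry_bound m0 (quad k w) (Hu k w)).
exists 1, ((m^-1) `^ (2 + 1) + 1); split => //; split.
  by rewrite ltr_pwDr // powR_ge0.
move=> k; apply: int_bound => [w|w]; first exact: powR_ge0.
move: (opnorm_bound m0 (quad k w) (Hu k w)) => /andP [hO0 hO1].
apply: (@le_trans _ _ (m^-1 `^ (2 + 1))); last by rewrite lerDl.
have r0 : (0 : R) <= 2 + 1 by [].
have mi0 : 0 <= m^-1 by rewrite invr_ge0 ltW.
exact: (ge0_ler_powR r0 hO0 mi0 hO1).
Qed.
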